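(* Let $\lambda=(\lambda^n_{s,h})_{n\in N,\,s\in S,\,h\in H}$ be any deterministic price decomposition process, and suppose the weekly uncertainties $(W_{s})_{s\in S}$ are weekly independent. Then for every week $s\in S$ and every state $x=(x^n)_{n\in N}\in\prod_{n\in N}X^n_{s}$, $$\sum_{n\in N} V^n_{s}[\lambda^n](x^n)+V^{A}_s[\lambda]\;\le\; V_{s}(x).$$
   Context: Setting. Weeks form a finite totally ordered set $S=\{s_0\prec\dots\prec\bar s\}$, with successor $s^+$ and an extra terminal week $s_{\mathrm{last}}=\bar s^+$; hours form a finite ordered set $H$. The system is a directed graph $(N,A)$ with node–arc incidence matrix $B\in\{-1,0,1\}^{N\times A}$ ($B_{n,a}=1$ if arc $a$ leaves $n$, $-1$ if it enters $n$, $0$ otherwise). For node $n$ and week $s$: the state $x^n_s\in X^n_s$ is the storage level at the first hour of week $s$; $W^n_s$ is the (random) vector of hourly uncertainties of week $s$ at node $n$; $u^n_s$ is the vector of hourly recourse controls; $f^n_s\in\mathbb{R}^{|H|}$ the hourly nodal import/export flows; for arc $a$, $q^a_s\in\mathbb{R}^{|H|}$ the hourly arc flows. Write $W_s=(W^n_s)_{n}$, $f_s=(f^n_s)_n$, $q_s=(q^a_s)_a$. Given are measurable weekly dynamics $x^n_{s^+}=g^n_s(x^n_s,w^n_s,u^n_s)$, nodal balance constraints $b^n_s(w^n_s,u^n_s)=f^n_s$, box constraints on hourly storage levels within the week and on hourly controls, weekly nodal costs $L^n_s(x^n_s,w^n_s,u^n_s)\in\mathbb{R}\cup\{+\infty\}$,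 weekly arc costs $L^a_s(q^a_s)\in\mathbb{R}\cup\{+\infty\}$, and final costs $K^n$. Weekly independence means the joint law of $(W_{s_0},\dots,W_{\bar s})$ is the product of its marginals. Decisions of week $s'$ taken from week $s$ onwards must be measurable with respect to $\sigma(W_s,\dots,W_{s'})$. Notation: $\langle\lambda^n_s,f^n_s\rangle=\sum_h\lambda^n_{s,h}f^n_{s,h}$, $\langle B^\top\lambda_s,q_s\rangle=\sum_h(B^\top\lambda_{s,h})^\top q_{s,h}$. Global cost-to-go: $V_s(x)=\min\mathbb{E}\big[\sum_{s'=s}^{\bar s}\big(\sum_{n}L^n_{s'}(X^n_{s'},W^n_{s'},U^n_{s'})+\sum_a L^a_{s'}(Q^a_{s'})\big)+\sum_n K^n(X^n_{s_{\mathrm{last}}})\big]$ over processes $(U,F,Q)$ subject to $X_s=x$, dynamics, balance and box constraints at each node, information constraints, and coupling $F_{s'}-BQ_{s'}=0$ for all $s'\in[s,\bar s]$. Nodal price cost-to-go: $V^n_s[\lambda^n](x^n)=\min\mathbb{E}\big[\sum_{s'=s}^{\bar s}\big(L^n_{s'}(X^n_{s'},W^n_{s'},U^n_{s'})+\langle\lambda^n_{s'},F^n_{s'}\rangle\big)+K^n(X^n_{s_{\mathrm{last}}})\big]$ over $(U^n,F^n)$ subject to $X^n_s=x^n$, nodal dynamics, balance, box and information constraints. Transport price cost-to-go (a constant): $V^A_s[\lambda]=\min\mathbb{E}\big[\sum_{s'=s}^{\bar s}\big(\sum_{a\in A}L^a_{s'}(Q^a_{s'})-\langle B^\top\lambda_{s'},Q_{s'}\rangle\big)\big]$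 over arc flow processes with $Q^a_{s'}$ measurable w.r.t. $\sigma(W_s,\dots,W_{s'})$. *)

(* Defs.v *)
From HB Require Import structures.
From mathcomp Require Import all_boot all_order all_algebra.
From mathcomp Require Import all_classical all_reals all_analysis measurable_realfun.
Unset Strict Implicit.
Unset Printing Implicit Defensive.
Import Order.TTheory GRing.Theory Num.Theory.
Local Open Scope classical_set_scope.
Local Open Scope ring_scope.

(*  - Weeks S = {0,...,T} (s_0 = 0, \bar s = T), terminal week s_last = T+1. *)
(*  - The hourly uncertainty vector W^n_s is indexed by a finite type IW n,  *)
(*    the hourly control vector u^n_s by a finite type IU n (these index     *)
(*    sets contain the hours).  Vector-valued random variables are families *)
(*    of real random variables (one per coordinate).                         *)
(*  - All processes are indexed by nat (weeks); only weeks in [s, T] matter. *)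

Section Model.
Context {R : realType} {d : measure_display} {Omega : measurableType d}.

Definition incidence {N A : finType} (src tgt : A -> N) (n : N) (a : A) : R :=
  (src a == n)%:R - (tgt a == n)%:R.

Definition sigmaW {N : finType} {IW : N -> finType}
    (W : nat -> forall n : N, IW n -> Omega -> R) (s t : nat) : set (set Omega) :=
  <<s [set E | exists r (n : N) (i : IW n) (B : set R),
         [/\ (s <= r <= t)%N, measurable B & E = W r n i @^-1` B] ] >>.

Definition measurable_wrt (G : set (set Omega)) (Z : Omega -> R) : Prop :=
  forall B : set R, measurable B -> G (Z @^-1` B).

(* weekly independence: the law of (W_0,...,W_T) is the product of the
   marginals, i.e. the sigma-algebras sigma(W_t), t in [0,T], are independent *)
Definition weekly_independent {N : finType} {IW : N -> finType}
    (P : probability Omega R) (T : nat)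
    (W : nat -> forall n : N, IW n -> Omega -> R) : Prop :=
  forall E : nat -> set Omega,
    (forall t, (t <= T)%N -> sigmaW W t t (E t)) ->
    P (\bigcap_(t in [set t | (t <= T)%N]) E t) = (\prod_(0 <= t < T.+1) P (E t))%E.

(* Joint (Borel) measurability of deterministic functions of vectors,
   expressed through composition with measurable random variables on Omega. *)
Definition jmeas_xwu {I J : Type} {dY : measure_display}
    {TY : measurableType dY} (f : R -> (I -> R) -> (J -> R) -> TY) : Prop :=
  forall (X : Omega -> R) (V : I -> Omega -> R) (Z : J -> Omega -> R),
    measurable_fun setT X -> (forall i, measurable_fun setT (V i)) ->
    (forall j, measurable_fun setT (Z j)) ->
    measurable_fun setT (fun w => f (X w) (fun i => V i w) (fun j => Z j w)).

Definition jmeas_vec {I : Type} {dY : measure_display} {TY : measurableType dY}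
    (f : (I -> R) -> TY) : Prop :=
  forall V : I -> Omega -> R, (forall i, measurable_fun setT (V i)) ->
    measurable_fun setT (fun w => f (fun i => V i w)).

(* state trajectory of one node started at x in week s:
   traj ... k is the state X_{s+k} *)
Fixpoint traj {I J : Type} (g : nat -> R -> (I -> R) -> (J -> R) -> R)
    (Wn : nat -> I -> Omega -> R) (U : nat -> J -> Omega -> R)
    (s : nat) (x : R) (k : nat) : Omega -> R :=
  match k with
  | 0 => fun _ => x
  | k'.+1 => fun w => g (s + k')%N (traj g Wn U s x k' w)
                        (fun i => Wn (s + k')%N i w) (fun j => U (s + k')%N j w)
  end.

(* X_t for t >= s *)
Definition state {I J : Type} (g : nat -> R -> (I -> R) -> (J -> R) -> R)
    (Wn : nat -> I -> Omega -> R) (U : nat -> J -> Omega -> R)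
    (s : nat) (x : R) (t : nat) : Omega -> R :=
  traj g Wn U s x (t - s).

Local Open Scope ereal_scope.

Section Nodal.
Variables (P : probability Omega R) (T : nat) (Info : nat -> nat -> set (set Omega)).
Variables (H I J : finType) (Wn : nat -> I -> Omega -> R).
Variables (g : nat -> R -> (I -> R) -> (J -> R) -> R)
          (b : nat -> (I -> R) -> (J -> R) -> H -> R)
          (box : nat -> R -> (I -> R) -> (J -> R) -> Prop)
          (L : nat -> R -> (I -> R) -> (J -> R) -> \bar R)
          (K : R -> \bar R)
          (lam : nat -> H -> R).

Definition nodal_admissible (s : nat) (x : R)
    (U : nat -> J -> Omega -> R) (F : nat -> H -> Omega -> R) : Prop :=
  forall t, (s <= t <= T)%N ->
    [/\ forall j, measurable_wrt (Info s t) (U t j),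
        forall h, measurable_wrt (Info s t) (F t h) &
        {ae P, forall w,
          (forall h, b t (fun i => Wn t i w) (fun j => U t j w) h = F t h w) /\
          box t (state g Wn U s x t w) (fun i => Wn t i w) (fun j => U t j w)}].

Definition nodal_cost (s : nat) (x : R)
    (U : nat -> J -> Omega -> R) (F : nat -> H -> Omega -> R) (w : Omega) : \bar R :=
  \sum_(s <= t < T.+1)
     (L t (state g Wn U s x t w) (fun i => Wn t i w) (fun j => U t j w)
      + (\sum_(h : H) lam t h * F t h w)%R%:E)
  + K (state g Wn U s x T.+1 w).

Definition Vnode (s : nat) (x : R) : \bar R :=
  ereal_inf [set e | exists U F, nodal_admissible s x U F /\
                                 e = \int[P]_w nodal_cost s x U F w].
End Nodal.

Section Transport.
Variables (P : probability Omega R) (T : nat) (Info : nat -> nat -> set (set Omega)).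
Variables (N A H : finType) (src tgt : A -> N).
Variables (La : A -> nat -> (H -> R) -> \bar R) (lam : nat -> N -> H -> R).

Definition transport_admissible (s : nat) (Q : nat -> A -> H -> Omega -> R) : Prop :=
  forall t, (s <= t <= T)%N -> forall a h, measurable_wrt (Info s t) (Q t a h).

Definition transport_cost (s : nat) (Q : nat -> A -> H -> Omega -> R) (w : Omega) : \bar R :=
  \sum_(s <= t < T.+1)
    (\sum_(a : A) La a t (fun h => Q t a h w)
     - (\sum_(h : H) \sum_(a : A)
          (\sum_(n : N) incidence src tgt n a * lam t n h) * Q t a h w)%R%:E).

Definition VA (s : nat) : \bar R :=
  ereal_inf [set e | exists Q, transport_admissible s Q /\
                               e = \int[P]_w transport_cost s Q w].
End Transport.

Section Global.
Variables (P : probability Omega R) (T : nat) (Info : nat -> nat -> set (set Omega)).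
Variables (N A H : finType) (src tgt : A -> N) (IW IU : N -> finType).
Variables (W : nat -> forall n : N, IW n -> Omega -> R)
          (g : forall n : N, nat -> R -> (IW n -> R) -> (IU n -> R) -> R)
          (b : forall n : N, nat -> (IW n -> R) -> (IU n -> R) -> H -> R)
          (box : forall n : N, nat -> R -> (IW n -> R) -> (IU n -> R) -> Prop)
          (L : forall n : N, nat -> R -> (IW n -> R) -> (IU n -> R) -> \bar R)
          (La : A -> nat -> (H -> R) -> \bar R)
          (K : N -> R -> \bar R).

Definition gstate (s : nat) (x : N -> R) (U : nat -> forall n : N, IU n -> Omega -> R)
    (n : N) (t : nat) : Omega -> R :=
  state (g n) (fun r i => W r n i) (fun r j => U r n j) s (x n) t.

Definition global_admissible (s : nat) (x : N -> R)
    (U : nat -> forall n : N, IU n -> Omega -> R)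
    (F : nat -> N -> H -> Omega -> R) (Q : nat -> A -> H -> Omega -> R) : Prop :=
  forall t, (s <= t <= T)%N ->
    [/\ forall n j, measurable_wrt (Info s t) (U t n j),
        forall n h, measurable_wrt (Info s t) (F t n h),
        forall a h, measurable_wrt (Info s t) (Q t a h) &
        {ae P, forall w,
          (forall n : N,
            (forall h, b n t (fun i => W t n i w) (fun j => U t n j w) h = F t n h w) /\
            box n t (gstate s x U n t w) (fun i => W t n i w) (fun j => U t n j w)) /\
          (forall n h, F t n h w = (\sum_(a : A) incidence src tgt n a * Q t a h w)%R)}].

Definition global_cost (s : nat) (x : N -> R)
    (U : nat -> forall n : N, IU n -> Omega -> R)
    (Q : nat -> A -> H -> Omega -> R) (w : Omega) : \bar R :=
  \sum_(s <= t < T.+1)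
    (\sum_(n : N) L n t (gstate s x U n t w) (fun i => W t n i w) (fun j => U t n j w)
     + \sum_(a : A) La a t (fun h => Q t a h w))
  + \sum_(n : N) K n (gstate s x U n T.+1 w).

Definition Vglob (s : nat) (x : N -> R) : \bar R :=
  ereal_inf [set e | exists U F Q, global_admissible s x U F Q /\
                                   e = \int[P]_w global_cost s x U Q w].
End Global.

End Model.

(* Main.v *)
Require Import Defs.
From HB Require Import structures.
From mathcomp Require Import all_boot all_order all_algebra.
From mathcomp Require Import all_classical all_reals all_analysis measurable_realfun.
From mathcomp Require Import lra zify.
Import Order.TTheory GRing.Theory Num.Theory.
Local Open Scope classical_set_scope.
Local Open Scope ring_scope.

Lemma mx0 {R : realType} (u : R) : Num.max u 0 = u + Num.max (- u) 0.
Proof.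
rewrite !maxElt; case: (ltrP u 0) => h; case: (ltrP (-u) 0) => h'; lra.
Qed.

Lemma mxge {R : realType} (u : R) : u <= Num.max u 0 /\ 0 <= Num.max u 0.
Proof. by rewrite !le_max !lexx ?orbT. Qed.

Local Open Scope ereal_scope.
Lemma maxy0 {R : realType} : maxe (+oo : \bar R) 0 = +oo.
Proof. by rewrite maxElt ltNge leey. Qed.
Lemma maxNy0 {R : realType} : maxe (-oo : \bar R) 0 = 0.
Proof. by rewrite maxElt ltNyr. Qed.

Lemma pw {R : realType} (a b : \bar R) : a != -oo -> b != -oo ->
 maxe (a+b) 0 + (maxe (-a) 0 + maxe (-b) 0) = maxe (-(a+b)) 0 + (maxe a 0 + maxe b 0)
 /\ maxe (-(a+b)) 0 <= maxe (-a) 0 + maxe (-b) 0.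
Proof.
have E0 : (0 : \bar R) = (0%R)%:E by [].
case: a => [x| |] // _; case: b => [y| |] // _ /=; rewrite ?maxy0 ?maxNy0.
- rewrite E0 -!EFin_max -!EFinD lee_fin.
  rewrite (mx0 (x+y)%R) (mx0 x) (mx0 y); split; first by congr (_%:E); lra.
  rewrite ge_max; apply/andP; split; have := mxge (-x)%R; have := mxge (-y)%R; lra.
- rewrite E0 -!EFin_max /= ?maxy0 ?maxNy0 ?addey ?addye // ?adde0 ?add0e; split => //.
  rewrite lee_fin; have := mxge (-x)%R; lra.
- rewrite E0 -!EFin_max /= ?maxy0 ?maxNy0 ?addey ?addye // ?adde0 ?add0e; split => //.
  rewrite lee_fin; have := mxge (-y)%R; lra.
- by rewrite ?maxy0 ?maxNy0 ?adde0.
Qed.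
Lemma arith {R : realType} (A X Y b c e : \bar R) : 0 <= A -> 0 <= X -> 0 <= Y ->
  b \is a fin_num -> c \is a fin_num -> e \is a fin_num ->
  A + (c + e) = b + (X + Y) -> (X - c) + (Y - e) <= A - b.
Proof.
case: b => // b _; case: c => // c _; case: e => // e _.
case: A => [a| |] //; case: X => [x| |] //; case: Y => [y| |] // _ _ _ /=.
all: rewrite ?lee_fin //=.
rewrite -!EFinD => -[]; lra.
Qed.

Lemma GL d (Omega : measurableType d) (R : realType) (P : measure Omega R)
  (f g : Omega -> \bar R) :
  measurable_fun setT f -> measurable_fun setT g ->
  (forall w, f w != -oo) -> (forall w, g w != -oo) ->
  \int[P]_w f w + \int[P]_w g w <= \int[P]_w (f w + g w).
Proof.
move=> mf mg nf ng.
have mh : measurable_fun setT (f \+ g) by exact: emeasurable_funD.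
have mfp := measurable_funepos mf; have mfn := measurable_funeneg mf.
have mgp := measurable_funepos mg; have mgn := measurable_funeneg mg.
have mhp := measurable_funepos mh; have mhn := measurable_funeneg mh.
have key : \int[P]_w (f \+ g)^\+ w + (\int[P]_w f^\- w + \int[P]_w g^\- w)
         = \int[P]_w (f \+ g)^\- w + (\int[P]_w f^\+ w + \int[P]_w g^\+ w).
  rewrite -!ge0_integralD //; try by move=> *; rewrite ?adde_ge0 // ?funepos_ge0 ?funeneg_ge0.
  - apply: eq_integral => w _; rewrite !funeposE !funenegE /=.
    by case: (pw _ _ (nf w) (ng w)).
  - exact: emeasurable_funD.
  - exact: emeasurable_funD.
have hle : \int[P]_w (f \+ g)^\- w <= \int[P]_w f^\- w + \int[P]_w g^\- w.
  rewrite -ge0_integralD //; try by move=> *; exact: funeneg_ge0.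
  apply: ge0_le_integral => //.
  - exact: emeasurable_funD.
  - move=> w _; rewrite !funenegE /=.
    by case: (pw _ _ (nf w) (ng w)).
rewrite (integralE _ _ f) (integralE _ _ g) (integralE _ _ (fun w => f w + g w)).
have fge0 : forall (k : Omega -> \bar R), 0 <= \int[P]_w k w -> \int[P]_w k w \is a fin_num \/ \int[P]_w k w = +oo.
  move=> k; case: (\int[P]_w k w) => [r _|_|//]; [by left|by right].
have [cf|cf] := fge0 _ (integral_ge0 _ (fun w _ => funeneg_ge0 f w)); last first.
  by rewrite cf addeNy addNye leNye.
have [cg|cg] := fge0 _ (integral_ge0 _ (fun w _ => funeneg_ge0 g w)); last first.
  by rewrite cg addeNy addeNy leNye.
apply: arith => //.
- exact: integral_ge0 => w _; exact: funepos_ge0.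
- exact: integral_ge0 => w _; exact: funepos_ge0.
- exact: integral_ge0 => w _; exact: funepos_ge0.
- rewrite ge0_fin_numE; last by apply: integral_ge0 => w _; exact: funeneg_ge0.
  apply: (le_lt_trans hle); by rewrite ltey_eq fin_numD cf cg.
Qed.

Section Helpers.
Context {R : realType} {d : measure_display} {Omega : measurableType d}.

Lemma addNNy (x y : \bar R) : x != -oo -> y != -oo -> x + y != -oo.
Proof. by rewrite adde_eq_ninfty negb_or => -> ->. Qed.

Lemma msum_in (I : eqType) (r : seq I) (F : I -> Omega -> \bar R) :
  (forall i, i \in r -> measurable_fun setT (F i)) ->
  measurable_fun setT (fun w => \sum_(i <- r) F i w).
Proof.
elim: r => [|i r IH] h.
  by under eq_fun do rewrite big_nil; exact: measurable_cst.
under eq_fun do rewrite big_cons; apply: emeasurable_funD.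
  by apply: h; rewrite mem_head.
by apply: IH => j jr; apply: h; rewrite in_cons jr orbT.
Qed.

Lemma nNy_sum (I : eqType) (r : seq I) (F : I -> \bar R) :
  (forall i, i \in r -> F i != -oo) -> \sum_(i <- r) F i != -oo.
Proof.
elim: r => [|i r IH] h; first by rewrite big_nil.
rewrite big_cons addNNy //.
  by apply: h; rewrite mem_head.
by apply: IH => j jr; apply: h; rewrite in_cons jr orbT.
Qed.

Lemma GLsum (P : measure Omega R) (I : Type) (r : seq I) (f : I -> Omega -> \bar R) :
  (forall i, measurable_fun setT (f i)) -> (forall i w, f i w != -oo) ->
  \sum_(i <- r) \int[P]_w f i w <= \int[P]_w (\sum_(i <- r) f i w).
Proof.
move=> mf nf; elim: r => [|i r IH].
  by rewrite big_nil; under eq_integral do rewrite big_nil; rewrite integral0.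
have -> : \int[P]_w (\sum_(j <- i :: r) f j w) = \int[P]_w (f i w + \sum_(j <- r) f j w).
  by apply: eq_integral => w _; rewrite big_cons.
rewrite big_cons.
apply: le_trans; last apply: GL.
- by apply: leeD.
- exact: mf.
- exact: emeasurable_sum.
- exact: nf.
- move=> w; elim: r {IH} => [|j r IH]; first by rewrite big_nil.
  by rewrite big_cons addNNy.
Qed.

Lemma traj_meas {I J : Type} (g : nat -> R -> (I -> R) -> (J -> R) -> R)
    (Wn : nat -> I -> Omega -> R) (U : nat -> J -> Omega -> R) s x k :
  (forall t, jmeas_xwu (Omega := Omega) (g t)) ->
  (forall t i, measurable_fun setT (Wn t i)) ->
  (forall k', (k' < k)%N -> forall j, measurable_fun setT (U (s + k')%N j)) ->
  measurable_fun setT (traj g Wn U s x k).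
Proof.
move=> mg mW; elim: k => [|k IH] mU /=; first exact: measurable_cst.
apply: (mg (s + k)%N).
- by apply: IH => k' lt j; apply: mU; apply: ltnW.
- exact: mW.
- exact: mU.
Qed.

End Helpers.

Lemma sigmaW_meas {R : realType} {d : measure_display} {Omega : measurableType d}
  {N : finType} {IW : N -> finType} (W : nat -> forall n : N, IW n -> Omega -> R) s t E :
  (forall t n i, measurable_fun setT (W t n i)) -> sigmaW W s t E -> measurable E.
Proof.
move=> mW; apply: smallest_sub => //; first exact: sigma_algebra_measurable.
move=> _ [r [n [i [B [_ mB ->]]]]].
by have := mW r n i measurableT B mB; rewrite setTI.
Qed.

Lemma wrt_meas {R : realType} {d : measure_display} {Omega : measurableType d}
  {N : finType} {IW : N -> finType} (W : nat -> forall n : N, IW n -> Omega -> R) s t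
  (Z : Omega -> R) :
  (forall t n i, measurable_fun setT (W t n i)) ->
  measurable_wrt (sigmaW W s t) Z -> measurable_fun setT Z.
Proof.
move=> mW h _ B mB; rewrite setTI; exact: sigmaW_meas mW (h B mB).
Qed.

Lemma ident {R : realType} (N : finType) (s T : nat) (Lt : N -> nat -> \bar R)
  (Ka : nat -> \bar R) (Kn : N -> \bar R) (lF : nat -> N -> R) (Rt : nat -> R) :
  (forall t, (s <= t <= T)%N -> (\sum_(n : N) lF t n)%R = Rt t) ->
  \sum_(n : N) (\sum_(s <= t < T.+1) (Lt n t + (lF t n)%:E) + Kn n)
    + \sum_(s <= t < T.+1) (Ka t - (Rt t)%:E)
  = \sum_(s <= t < T.+1) (\sum_(n : N) Lt n t + Ka t) + \sum_(n : N) Kn n.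
Proof.
move=> hR; rewrite big_split /= exchange_big /= addeAC; congr (_ + _).
rewrite -big_split /=; apply: eq_big_nat => t /andP[st tT].
rewrite big_split /= sumEFin hR; last by rewrite st -ltnS.
by rewrite addeACA subee // adde0.
Qed.

Lemma coupling_sum {R : realType} (N A H : finType) (src tgt : A -> N)
  (lam : N -> H -> R) (F : N -> H -> R) (Q : A -> H -> R) :
  (forall n h, F n h = \sum_(a : A) incidence src tgt n a * Q a h)%R ->
  (\sum_(n : N) \sum_(h : H) lam n h * F n h =
   \sum_(h : H) \sum_(a : A) (\sum_(n : N) incidence src tgt n a * lam n h) * Q a h)%R.
Proof.
move=> cF.
under eq_bigr do under eq_bigr do rewrite cF GRing.mulr_sumr.
rewrite exchange_big /=; apply: eq_bigr => h _.
rewrite exchange_big /=; apply: eq_bigr => a _.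
rewrite GRing.mulr_suml; apply: eq_bigr => n _.
by rewrite GRing.mulrA (GRing.mulrC (lam n h)).
Qed.

Local Close Scope ereal_scope.

Theorem proposition2 (R : realType) (d : measure_display) (Omega : measurableType d)
    (P : probability Omega R)
    (T : nat) (N A H : finType) (src tgt : A -> N) (IW IU : N -> finType)
    (W : nat -> forall n : N, IW n -> Omega -> R)
    (Xs : N -> nat -> set R)
    (g : forall n : N, nat -> R -> (IW n -> R) -> (IU n -> R) -> R)
    (b : forall n : N, nat -> (IW n -> R) -> (IU n -> R) -> H -> R)
    (box : forall n : N, nat -> R -> (IW n -> R) -> (IU n -> R) -> Prop)
    (L : forall n : N, nat -> R -> (IW n -> R) -> (IU n -> R) -> \bar R)
    (La : A -> nat -> (H -> R) -> \bar R)
    (K : N -> R -> \bar R)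
    (lam : nat -> N -> H -> R) :
  (forall t n i, measurable_fun setT (W t n i)) ->
  (forall n t, jmeas_xwu (Omega := Omega) (g n t)) ->
  (forall n t, jmeas_xwu (Omega := Omega) (L n t)) ->
  (forall a t, jmeas_vec (Omega := Omega) (La a t)) ->
  (forall n, measurable_fun setT (K n)) ->
  (forall n t x w u, L n t x w u != -oo%E) ->
  (forall a t q, La a t q != -oo%E) ->
  (forall n x, K n x != -oo%E) ->
  weekly_independent P T W ->
  forall (s : nat) (x : N -> R), (s <= T)%N -> (forall n, Xs n s (x n)) ->
  (\sum_(n : N)
      Vnode P T (sigmaW W) H (IW n) (IU n) (fun t i => W t n i)
            (g n) (b n) (box n) (L n) (K n) (fun t h => lam t n h) s (x n)
   + VA P T (sigmaW W) N A H src tgt La lam s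
   <= Vglob P T (sigmaW W) N A H src tgt IW IU W g b box L La K s x)%E.
Proof.
move=> mW mg mL mLa mK nL nLa nK _ s x sT _.
apply/ereal_infP => _ [U [F [Q [adm ->]]]].
pose nod n := nodal_cost T H (IW n) (IU n) (fun t i => W t n i) (g n) (L n) (K n)
  (fun t h => lam t n h) s (x n) (fun r j => U r n j) (fun r h => F r n h).
pose tr := transport_cost T N A H src tgt La lam s Q.
have mU : forall t, (s <= t <= T)%N -> forall n j, measurable_fun setT (U t n j).
  by move=> t ht n j; case: (adm t ht) => h _ _ _; exact: wrt_meas mW (h n j).
have mF : forall t, (s <= t <= T)%N -> forall n h, measurable_fun setT (F t n h).
  by move=> t ht n h; case: (adm t ht) => _ hh _ _; exact: wrt_meas mW (hh n h).
have mQ : forall t, (s <= t <= T)%N -> forall a h, measurable_fun setT (Q t a h).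
  by move=> t ht a h; case: (adm t ht) => _ _ hh _; exact: wrt_meas mW (hh a h).
have mst : forall n t, (t <= T.+1)%N -> measurable_fun setT
    (state (g n) (fun r i => W r n i) (fun r j => U r n j) s (x n) t).
  move=> n t tT; rewrite /state; apply: traj_meas => //.
  move=> k' hk j; apply: mU; apply/andP; split; first exact: leq_addr.
    lia.
have mnod : forall n, measurable_fun setT (nod n).
  move=> n; rewrite /nod /nodal_cost; apply: emeasurable_funD.
    apply: msum_in => t; rewrite mem_index_iota => /andP[st tT].
    have htT : (s <= t <= T)%N by rewrite st -ltnS.
    apply: emeasurable_funD.
      apply: (mL n t); first (apply: mst; lia).
      - by move=> i; exact: mW.
      - by move=> j; exact: mU.
    apply/measurable_EFinP; apply: measurable_sum => h.
    exact: (measurable_funM (measurable_cst _) (mF _ htT _ _)).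
  by apply: measurableT_comp; [exact: mK | exact: mst].
have mtr : measurable_fun setT tr.
  rewrite /tr /transport_cost; apply: msum_in => t; rewrite mem_index_iota => /andP[st tT].
  have htT : (s <= t <= T)%N by rewrite st -ltnS.
  apply: emeasurable_funB.
    apply: msum_in => a _; apply: (mLa a t) => h; exact: mQ.
  apply/measurable_EFinP; apply: measurable_sum => h; apply: measurable_sum => a.
  exact: (measurable_funM (measurable_cst _) (mQ _ htT _ _)).
have mglob : measurable_fun setT (global_cost T N A H IW IU W g L La K s x U Q).
  rewrite /global_cost; apply: emeasurable_funD.
    apply: msum_in => t; rewrite mem_index_iota => /andP[st tT].
    have htT : (s <= t <= T)%N by rewrite st -ltnS.
    apply: emeasurable_funD.
      apply: msum_in => n _; apply: (mL n t); first (apply: mst; lia).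
      - by move=> i; exact: mW.
      - by move=> j; exact: mU.
    apply: msum_in => a _; apply: (mLa a t) => h; exact: mQ.
  apply: msum_in => n _; rewrite /gstate.
  by apply: measurableT_comp; [exact: mK | exact: mst].
have nnod : forall n w, nod n w != -oo%E.
  move=> n w; rewrite /nod /nodal_cost; apply: addNNy; last exact: nK.
  by apply: nNy_sum => t _; apply: addNNy.
have ntr : forall w, tr w != -oo%E.
  move=> w; rewrite /tr /transport_cost; apply: nNy_sum => t _; apply: addNNy => //.
  by apply: nNy_sum => a _.
have aeall : {ae P, forall w, forall i : 'I_T.+1, (s <= i)%N ->
    forall n h, F i n h w = (\sum_(a : A) incidence src tgt n a * Q i a h w)%R}.
  apply: filter_forall => i.
  case: (leqP s i) => si.
    have hi : (s <= i <= T)%N by rewrite si -ltnS ltn_ord.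
    case: (adm i hi) => _ _ _ ae.
    by apply: filterS ae => w [_ h] _.
  by apply: aeW.
apply: (@le_trans _ _ (\sum_(n : N) \int[P]_w nod n w + \int[P]_w tr w)%E).
  apply: leeD.
    apply: lee_sum => n _; apply: ge_ereal_inf.
    exists (\int[P]_w nod n w)%E => //.
    exists (fun r j => U r n j), (fun r h => F r n h); split => //.
    move=> t ht; case: (adm t ht) => hU hF _ ae; split.
    - by move=> j; exact: hU.
    - by move=> h; exact: hF.
    - by apply: filterS ae => w [h _]; exact: h n.
  apply: ge_ereal_inf; exists (\int[P]_w tr w)%E => //.
  exists Q; split => //.
  by move=> t ht; case: (adm t ht).
apply: le_trans; first (apply: leeD; [exact: (GLsum P _ (index_enum N) _ mnod nnod) | exact: lexx]).
apply: le_trans; first (apply: GL => //; [exact: emeasurable_sum | move=> w; exact: nNy_sum]).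
rewrite le_eqVlt; apply/orP; left; apply/eqP; apply: ae_eq_integral => //.
  exact: emeasurable_funD (emeasurable_sum _ mnod) mtr.
apply: filterS aeall => w hw _.
rewrite /nod /tr /nodal_cost /transport_cost /global_cost /gstate.
apply: ident => t /andP[st tT].
apply: (@coupling_sum _ N A H src tgt (fun n h => lam t n h) (fun n h => F t n h w) (fun a h => Q t a h w)).
by move=> n h; apply: (hw (Ordinal (tT : (t < T.+1)%N)) st).
Qed.
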